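(* Let $k\ge 2$ be an integer and suppose that every set of $k-1$ distinct positive integers has the LR property. Then every set $\{v_1,\ldots,v_k\}$ of $k$ distinct positive integers with $\gcd(v_1,\ldots,v_k)=1$ and \[ \prod_{i=1}^{k} v_i \ge \left[\frac{\binom{k+1}{2}^{k-1}}{k}\right]^k \] has the LR property.
   Context: For a real number $x$, $\|x\|$ denotes the distance from $x$ to the nearest integer. A finite set $S$ of $m$ integers has the LR (lonely runner) property if there exists a real $t$ such that $\|tv\|\ge \frac{1}{m+1}$ for all $v\in S$. The square brackets in the bound are ordinary brackets (not an integer-part function). *)

(* Defs.v *)
From Stdlib Require Import Reals List Arith.
Open Scope R_scope.

Definition frac_part (x : R) : R := x - IZR (Int_part x).
Definition dist_nint (x : R) : R := Rmin (frac_part x) (1 - frac_part x).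

(* A finite set of integers, given as a duplicate-free list S of size m, has the LR property. *)
Definition LR_property (S : list nat) : Prop :=
  exists t : R, forall v, In v S ->
    dist_nint (t * INR v) >= 1 / (INR (length S) + 1).

Fixpoint binom (n k : nat) : nat :=
  match n, k with
  | _, O => 1%nat
  | O, S _ => 0%nat
  | S n', S k' => (binom n' k' + binom n' k)%nat
  end.

Definition prodl (S : list nat) : nat := fold_right Nat.mul 1%nat S.
Definition gcdl (S : list nat) : nat := fold_right Nat.gcd 0%nat S.

(* Main.v *)
Require Import Defs.
From Stdlib Require Import Reals List Arith.
From Stdlib Require Import Lra Lia ZArith Znumtheory Classical.
Open Scope R_scope.

Lemma Ip_spec r : IZR (Int_part r) <= r < IZR (Int_part r) + 1.
Proof. destruct (base_Int_part r). split; lra. Qed.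

Lemma Ip_unique r z : IZR z <= r < IZR z + 1 -> Int_part r = z.
Proof.
  intros [H1 H2]. destruct (Ip_spec r) as [H3 H4].
  assert (A : (z < Int_part r + 1)%Z). { apply lt_IZR. rewrite plus_IZR. simpl. lra. }
  assert (B : (Int_part r < z + 1)%Z). { apply lt_IZR. rewrite plus_IZR. simpl. lra. }
  lia.
Qed.

Lemma dist_le x (n : Z) : dist_nint x <= Rabs (x - IZR n).
Proof.
  unfold dist_nint, Defs.frac_part. destruct (Ip_spec x) as [H1 H2].
  remember (Int_part x) as z eqn:Ez; clear Ez.
  destruct (Z_le_gt_dec n z) as [Hn|Hn].
  - apply IZR_le in Hn. rewrite Rabs_right by lra.
    eapply Rle_trans. apply Rmin_l. lra.
  - assert (Hn' : (z + 1 <= n)%Z) by lia. apply IZR_le in Hn'. rewrite plus_IZR in Hn'. simpl in Hn'.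
    rewrite Rabs_left1 by lra.
    eapply Rle_trans. apply Rmin_r. lra.
Qed.

Lemma dist_att x : exists n : Z, dist_nint x = Rabs (x - IZR n).
Proof.
  unfold dist_nint, Defs.frac_part. destruct (Ip_spec x) as [H1 H2].
  remember (Int_part x) as z eqn:Ez; clear Ez.
  destruct (Rle_dec (x - IZR z) (1 - (x - IZR z))) as [h|h].
  - exists z. rewrite Rmin_left by lra. rewrite Rabs_right by lra. reflexivity.
  - exists (z+1)%Z. rewrite Rmin_right by lra. rewrite plus_IZR. simpl.
    rewrite Rabs_left1 by lra. lra.
Qed.

Lemma dist_pert x e (m : Z) : dist_nint (x + e + IZR m) >= dist_nint x - Rabs e.
Proof.
  destruct (dist_att (x + e + IZR m)) as [n Hn]. rewrite Hn.
  pose proof (dist_le x (n - m)) as H. rewrite minus_IZR in H.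
  replace (x - (IZR n - IZR m)) with ((x + e + IZR m - IZR n) + (- e)) in H by ring.
  pose proof (Rabs_triang (x + e + IZR m - IZR n) (-e)). rewrite Rabs_Ropp in H0. lra.
Qed.

Lemma dist_opp x : dist_nint (- x) = dist_nint x.
Proof.
  apply Rle_antisym.
  - destruct (dist_att x) as [n Hn]. rewrite Hn.
    pose proof (dist_le (-x) (-n)). rewrite opp_IZR in H.
    replace (-x - - IZR n) with (- (x - IZR n)) in H by ring. rewrite Rabs_Ropp in H. exact H.
  - destruct (dist_att (-x)) as [n Hn]. rewrite Hn.
    pose proof (dist_le x (-n)). rewrite opp_IZR in H.
    replace (x - - IZR n) with (- (-x - IZR n)) in H by ring. rewrite Rabs_Ropp in H. exact H.
Qed.

Lemma dist_abs x : dist_nint (Rabs x) = dist_nint x.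
Proof.
  destruct (Rle_dec 0 x). rewrite Rabs_right by lra; auto.
  rewrite Rabs_left by lra. apply dist_opp.
Qed.

Definition prodR (l : list R) := fold_right Rmult 1 l.
Definition sumR (l : list R) := fold_right Rplus 0 l.
Lemma Rdiv_le_0_compat a b : 0 <= a -> 0 < b -> 0 <= a / b.
Proof. intros. unfold Rdiv. apply Rmult_le_pos; auto. left. apply Rinv_0_lt_compat; auto. Qed.
Definition sumn (l : list nat) : nat := fold_right Nat.add 0%nat l.

Definition Ff (n : nat) (x y : R) := x ^ (S n) - INR (S n) * x * y ^ n + INR n * y ^ (S n).

Lemma Ff_rec n x y : Ff (S n) x y = x * Ff n x y + INR (S n) * y ^ n * (x - y)^2.
Proof. unfold Ff. rewrite !S_INR. simpl. ring. Qed.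

Lemma Ff_nonneg n x y : 0 <= x -> 0 <= y -> 0 <= Ff n x y.
Proof.
  intros hx hy. induction n.
  - unfold Ff. simpl. lra.
  - rewrite Ff_rec. apply Rplus_le_le_0_compat.
    + apply Rmult_le_pos; auto.
    + apply Rmult_le_pos. apply Rmult_le_pos. apply pos_INR. apply pow_le; auto.
      apply pow2_ge_0.
Qed.

Lemma Ff_pos n x y : 0 <= x -> 0 < y -> x <> y -> 0 < Ff (S n) x y.
Proof.
  intros hx hy hxy. rewrite Ff_rec. apply Rplus_le_lt_0_compat.
  - apply Rmult_le_pos; auto. apply Ff_nonneg; lra.
  - apply Rmult_lt_0_compat. apply Rmult_lt_0_compat. apply lt_0_INR; lia. apply pow_lt; auto.
    assert (x - y <> 0) by lra. pose proof (Rsqr_pos_lt _ H). unfold Rsqr in H0. simpl. lra.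
Qed.

Lemma two_step n a A : (1 <= n)%nat -> 0 <= a -> 0 <= A ->
  a * A ^ n <= ((a + INR n * A) / INR (S n)) ^ (S n).
Proof.
  intros hn ha hA. set (B := (a + INR n * A) / INR (S n)).
  assert (hS : 0 < INR (S n)) by (apply lt_0_INR; lia).
  assert (hB : INR (S n) * B = a + INR n * A) by (unfold B; field; lra).
  assert (hB0 : 0 <= B). { unfold B. apply Rdiv_le_0_compat; try lra.
    pose proof (pos_INR n). nra. }
  pose proof (Ff_nonneg n B A hB0 hA). unfold Ff in H.
  replace (a * A ^ n) with (INR (S n) * B * A ^ n - INR n * A ^ (S n)).
  lra. rewrite hB. simpl. ring.
Qed.

Lemma two_step_strict n a A : (1 <= n)%nat -> 0 <= a -> 0 < A -> a <> A ->
  a * A ^ n < ((a + INR n * A) / INR (S n)) ^ (S n).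
Proof.
  intros hn ha hA hne. destruct n as [|m]; [lia|].
  set (B := (a + INR (S m) * A) / INR (S (S m))).
  assert (hS : 0 < INR (S (S m))) by (apply lt_0_INR; lia).
  assert (hB : INR (S (S m)) * B = a + INR (S m) * A) by (unfold B; field; lra).
  assert (hB0 : 0 <= B). { unfold B. apply Rdiv_le_0_compat; try lra.
    pose proof (pos_INR (S m)). nra. }
  assert (hBA : B <> A). { intro e. rewrite e in hB. rewrite !S_INR in hB. apply hne. nra. }
  pose proof (Ff_pos m B A hB0 hA hBA). unfold Ff in H.
  replace (a * A ^ (S m)) with (INR (S (S m)) * B * A ^ (S m) - INR (S m) * A ^ (S (S m))).
  lra. rewrite hB. simpl. ring.
Qed.

Lemma sumR_nonneg l : (forall x, In x l -> 0 <= x) -> 0 <= sumR l.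
Proof. induction l; simpl; intros H. lra. pose proof (H a (or_introl eq_refl)).
  pose proof (IHl (fun x hx => H x (or_intror hx))). lra. Qed.

Lemma amgm l : (forall x, In x l -> 0 <= x) -> prodR l <= (sumR l / INR (length l)) ^ length l.
Proof.
  induction l as [|a xs IH]; intros H.
  - simpl. lra.
  - destruct xs as [|b ys].
    + simpl. replace ((a + 0) / 1 * 1) with a by field. lra.
    + set (n := length (b :: ys)).
      assert (hn : (1 <= n)%nat) by (unfold n; simpl; lia).
      assert (hnR : 0 < INR n) by (apply lt_0_INR; lia).
      set (A := sumR (b :: ys) / INR n).
      assert (hA : 0 <= A). { unfold A. apply Rdiv_le_0_compat; auto.
        apply sumR_nonneg. intros; apply H; simpl; auto. }
      assert (ha : 0 <= a) by (apply H; simpl; auto).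
      assert (IH' : prodR (b :: ys) <= A ^ n) by (apply IH; intros; apply H; simpl; auto).
      change (prodR (a :: b :: ys)) with (a * prodR (b :: ys)).
      change (length (a :: b :: ys)) with (S n).
      change (sumR (a :: b :: ys)) with (a + sumR (b :: ys)).
      replace (sumR (b :: ys)) with (INR n * A) by (unfold A; field; lra).
      eapply Rle_trans. apply Rmult_le_compat_l. exact ha. exact IH'.
      apply two_step; auto.
Qed.

Lemma sumR_const l w : (forall x, In x l -> x = w) -> sumR l = INR (length l) * w.
Proof. induction l; simpl; intros H. ring. rewrite (H a (or_introl eq_refl)).
  rewrite IHl by (intros; apply H; auto). destruct (length l); simpl; ring. Qed.

Lemma amgm_strict l : (forall x, In x l -> 0 < x) ->
  (exists x y, In x l /\ In y l /\ x <> y) ->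
  prodR l < (sumR l / INR (length l)) ^ length l.
Proof.
  induction l as [|a xs IH]; intros H Hd.
  - destruct Hd as [x [y [hx _]]]. destruct hx.
  - destruct xs as [|b ys].
    + destruct Hd as [x [y [hx [hy hxy]]]]. simpl in hx, hy. destruct hx as [hx|[]]; destruct hy as [hy|[]]. congruence.
    + set (n := length (b :: ys)).
      assert (hn : (1 <= n)%nat) by (unfold n; simpl; lia).
      assert (hnR : 0 < INR n) by (apply lt_0_INR; lia).
      set (A := sumR (b :: ys) / INR n).
      assert (ha : 0 < a) by (apply H; simpl; auto).
      assert (H' : forall x, In x (b :: ys) -> 0 < x) by (intros; apply H; simpl; auto).
      assert (hA : 0 < A). { unfold A. apply Rdiv_lt_0_compat; auto.
        change (sumR (b :: ys)) with (b + sumR ys).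
        pose proof (sumR_nonneg ys (fun x hx => Rlt_le _ _ (H' x (or_intror hx)))).
        pose proof (H' b (or_introl eq_refl)). lra. }
      assert (IH' : prodR (b :: ys) <= A ^ n) by (apply amgm; intros; left; apply H'; auto).
      change (prodR (a :: b :: ys)) with (a * prodR (b :: ys)).
      change (length (a :: b :: ys)) with (S n).
      change (sumR (a :: b :: ys)) with (a + sumR (b :: ys)).
      replace (sumR (b :: ys)) with (INR n * A) by (unfold A; field; lra).
      destruct (classic (exists x y, In x (b :: ys) /\ In y (b :: ys) /\ x <> y)) as [Hd'|Hd'].
      * eapply Rlt_le_trans. apply Rmult_lt_compat_l. exact ha. apply IH; auto.
        apply two_step; auto; lra.
      * assert (Hall : forall x, In x (b :: ys) -> x = b).
        { intros x hx. apply NNPP. intro c. apply Hd'. exists x, b. simpl; auto. }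
        assert (HA : A = b). { unfold A. rewrite (sumR_const _ b Hall). fold n. field. lra. }
        assert (hab : a <> A). { intro e. destruct Hd as [x [y [hx [hy hxy]]]].
          apply hxy. destruct hx as [hx|hx]; destruct hy as [hy|hy].
          - congruence.
          - rewrite (Hall y hy). congruence.
          - rewrite (Hall x hx). congruence.
          - rewrite (Hall x hx), (Hall y hy). auto. }
        eapply Rle_lt_trans. apply Rmult_le_compat_l. lra. exact IH'.
        apply two_step_strict; auto; lra.
Qed.

Lemma prodR_map l : prodR (map INR l) = INR (prodl l).
Proof. unfold prodR, prodl. induction l; simpl. reflexivity. rewrite mult_INR, IHl. reflexivity. Qed.

Lemma sumR_map l : sumR (map INR l) = INR (sumn l).
Proof. unfold sumR, sumn. induction l; simpl. reflexivity. rewrite plus_INR, IHl. reflexivity. Qed.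

Lemma binom1 n : binom n 1 = n.
Proof. induction n; simpl; auto. destruct n; simpl in *; lia. Qed.

Lemma binom2 n : (2 * binom (S n) 2 = S n * n)%nat.
Proof.
  induction n. reflexivity.
  change (binom (S (S n)) 2) with (binom (S n) 1 + binom (S n) 2)%nat.
  rewrite binom1. lia.
Qed.

Lemma sum_bound (k C : nat) (V : list nat) : (2 <= k)%nat -> NoDup V -> length V = k ->
  (forall v, In v V -> (0 < v)%nat) ->
  INR (prodl V) >= (INR C ^ (k - 1) / INR k) ^ k -> (C ^ (k - 1) < sumn V)%nat.
Proof.
  intros hk hnd hl hpos hP.
  assert (hkR : 0 < INR k) by (apply lt_0_INR; lia).
  assert (Hs : INR (prodl V) < (INR (sumn V) / INR k) ^ k).
  { rewrite <- prodR_map, <- sumR_map. rewrite <- hl at 1 2. rewrite <- (length_map INR V).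
    apply amgm_strict.
    - intros x hx. apply in_map_iff in hx. destruct hx as [v [<- hv]]. apply lt_0_INR. auto.
    - destruct V as [|a [|b W]]; simpl in hl; try lia.
      exists (INR a), (INR b). simpl. split; auto. split; auto.
      intro e. apply INR_eq in e. subst. inversion hnd. apply H1. simpl; auto. }
  assert (Hlt : INR C ^ (k - 1) / INR k < INR (sumn V) / INR k).
  { destruct (Rlt_le_dec (INR C ^ (k - 1) / INR k) (INR (sumn V) / INR k)) as [h|h]; auto.
    exfalso. assert (0 <= INR (sumn V) / INR k) by (apply Rdiv_le_0_compat; auto; apply pos_INR).
    pose proof (pow_incr _ _ k (conj H h)). lra. }
  assert (INR C ^ (k - 1) < INR (sumn V)).
  { apply Rmult_lt_reg_r with (/ INR k). apply Rinv_0_lt_compat; auto. exact Hlt. }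
  rewrite <- pow_INR in H. apply INR_lt. exact H.
Qed.


Fixpoint allvecs (k C : nat) : list (list nat) :=
  match k with
  | O => nil :: nil
  | S k' => flat_map (fun m => map (cons m) (allvecs k' C)) (seq 0 C)
  end.

Lemma length_flat_map_const {A B} (f : A -> list B) (l : list A) n :
  (forall x, In x l -> length (f x) = n) -> length (flat_map f l) = (length l * n)%nat.
Proof. induction l; simpl; intros H. auto. rewrite length_app, H, IHl; auto. Qed.

Lemma allvecs_length k C : length (allvecs k C) = (C ^ k)%nat.
Proof.
  induction k; simpl. auto. rewrite (length_flat_map_const _ _ (C ^ k)).
  rewrite length_seq. lia. intros. rewrite length_map. auto.
Qed.

Lemma allvecs_in k C w : length w = k -> (forall x, In x w -> (x < C)%nat) -> In w (allvecs k C).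
Proof.
  revert w. induction k; intros w hl hw; destruct w as [|a w]; simpl in hl; try lia.
  - simpl; auto.
  - simpl. apply in_flat_map. exists a. split. apply in_seq. split. lia. simpl. apply hw. simpl; auto.
    apply in_map. apply IHk. lia. intros; apply hw; simpl; auto.
Qed.

Lemma nodup_map_or {A B} (F : A -> B) (l : list A) : NoDup l -> ~ NoDup (map F l) ->
  exists x y, In x l /\ In y l /\ x <> y /\ F x = F y.
Proof.
  induction l as [|a l IH]; intros hnd hnm.
  - exfalso. apply hnm. constructor.
  - inversion hnd; subst. simpl in hnm.
    destruct (classic (In (F a) (map F l))) as [h|h].
    + apply in_map_iff in h. destruct h as [y [hy1 hy2]]. exists a, y. simpl. repeat split; auto.
      intro e; subst; auto.
    + destruct IH as [x [y [h1 [h2 [h3 h4]]]]]; auto.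
      intro c. apply hnm. constructor; auto.
      exists x, y. simpl. auto.
Qed.

Lemma NoDup_map_inj {A B} (f : A -> B) l : (forall x y, f x = f y -> x = y) -> NoDup l -> NoDup (map f l).
Proof. intros hf hn. induction hn; simpl; constructor; auto.
  intro h. apply in_map_iff in h. destruct h as [y [e hy]]. apply hf in e. subst; auto. Qed.

Lemma NoDup_flat_map {A B} (f : A -> list B) (L : list A) : NoDup L -> (forall x, NoDup (f x)) ->
  (forall x x' y, In x L -> In x' L -> In y (f x) -> In y (f x') -> x = x') -> NoDup (flat_map f L).
Proof.
  induction L as [|a L IH]; intros hL hf hd; simpl. constructor.
  inversion hL; subst. apply NoDup_app; auto.
  - apply IH; auto. intros; eapply hd; simpl; eauto.
  - intros y hy1 hy2. apply in_flat_map in hy2. destruct hy2 as [x [hx hy]].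
    assert (a = x) by (eapply hd; simpl; eauto). subst; auto.
Qed.

Lemma sum_seq_nth V : fold_right Nat.add 0%nat (map (fun l => nth l V 0%nat) (seq 0 (length V))) = sumn V.
Proof.
  induction V; simpl; auto. f_equal. rewrite <- seq_shift, map_map. simpl. auto.
Qed.

Lemma length_flat_map_sum {A B} (f : A -> list B) l :
  length (flat_map f l) = fold_right Nat.add 0%nat (map (fun x => length (f x)) l).
Proof. induction l; simpl; auto. rewrite length_app, IHl; auto. Qed.

Lemma sum_map_mul (g : nat -> nat) (C : nat) l :
  fold_right Nat.add 0%nat (map (fun x => (C * g x)%nat) l) = (C * fold_right Nat.add 0%nat (map g l))%nat.
Proof. induction l; simpl; auto; lia. Qed.

Lemma nth_le_sumn V l : (l < length V)%nat -> (nth l V 0 <= sumn V)%nat.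
Proof. revert l; induction V; intros l hl; simpl in *. lia. destruct l. lia. specialize (IHV l). lia. Qed.

Definition IsInt (r : R) := exists z : Z, r = IZR z.

Lemma gcd_int V t : (forall x, In x V -> IsInt (t * INR x)) -> IsInt (t * INR (gcdl V)).
Proof.
  induction V as [|a V IH]; intros H; simpl.
  - exists 0%Z. simpl. ring.
  - assert (Ha : IsInt (t * INR a)) by (apply H; simpl; auto).
    assert (Hg : IsInt (t * INR (gcdl V))) by (apply IH; intros; apply H; simpl; auto).
    destruct Ha as [za Ha]. destruct Hg as [zg Hg].
    destruct (Nat.gcd_bezout a (gcdl V)) as [[x [y E]]|[x [y E]]].
    + exists (Z.of_nat x * za - Z.of_nat y * zg)%Z.
      apply (f_equal INR) in E. rewrite plus_INR, !mult_INR in E.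
      rewrite minus_IZR, !mult_IZR, <- Ha, <- Hg, <- !INR_IZR_INZ.
      replace (INR (Nat.gcd a (gcdl V))) with (INR x * INR a - INR y * INR (gcdl V)) by lra. ring.
    + exists (Z.of_nat x * zg - Z.of_nat y * za)%Z.
      apply (f_equal INR) in E. rewrite plus_INR, !mult_INR in E.
      rewrite minus_IZR, !mult_IZR, <- Ha, <- Hg, <- !INR_IZR_INZ.
      replace (INR (Nat.gcd a (gcdl V))) with (INR x * INR (gcdl V) - INR y * INR a) by lra. ring.
Qed.

Definition vR (V : list nat) l := INR (nth l V 0%nat).
Definition etaR (V : list nat) Dn l := INR (S l * nth l V 0%nat)%nat / INR Dn.
Definition tm (V : list nat) C Dn (e : nat * nat) :=
  INR (snd e * Dn + S (fst e) * nth (fst e) V 0)%nat / INR (Dn * C * nth (fst e) V 0)%nat.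
Definition yv V C Dn l t := INR C * t * vR V l - etaR V Dn l.
Definition fl V C Dn l t := Int_part (yv V C Dn l t).
Definition cidx V C Dn l t := Z.to_nat (Z.modulo (fl V C Dn l t) (Z.of_nat C)).
Definition cvec V C Dn k t := map (fun l => cidx V C Dn l t) (seq 0 k).
Definition evs (V : list nat) C k := flat_map (fun l => map (fun m => (l, m)) (seq 0 (C * nth l V 0)%nat)) (seq 0 k).

Lemma evs_in V C k l m : In (l, m) (evs V C k) <-> (l < k /\ m < C * nth l V 0)%nat.
Proof.
  unfold evs. rewrite in_flat_map. split.
  - intros [x [hx hy]]. apply in_map_iff in hy. destruct hy as [m' [e hm]]. inversion e; subst.
    apply in_seq in hx. apply in_seq in hm. lia.
  - intros [h1 h2]. exists l. split. apply in_seq; lia. apply in_map_iff. exists m. split; auto. apply in_seq; lia.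
Qed.

Lemma evs_nodup V C k : NoDup (evs V C k).
Proof.
  unfold evs. apply NoDup_flat_map. apply seq_NoDup.
  - intros x. apply NoDup_map_inj. intros a b e; inversion e; auto. apply seq_NoDup.
  - intros x x' y _ _ h1 h2. apply in_map_iff in h1, h2. destruct h1 as [a [e1 _]]. destruct h2 as [b [e2 _]].
    subst. inversion e2; auto.
Qed.

Lemma evs_length V C : length (evs V C (length V)) = (C * sumn V)%nat.
Proof.
  unfold evs. rewrite length_flat_map_sum. rewrite map_ext with (g := fun l => (C * nth l V 0)%nat).
  rewrite sum_map_mul, sum_seq_nth. auto. intros. rewrite length_map, length_seq. auto.
Qed.

Lemma cvec_in V C Dn k t : (0 < C)%nat -> In (cvec V C Dn k t) (allvecs k C).
Proof.
  intros hC. apply allvecs_in. unfold cvec. rewrite length_map, length_seq; auto.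
  intros x hx. unfold cvec in hx. apply in_map_iff in hx. destruct hx as [l [<- _]].
  unfold cidx. pose proof (Z.mod_pos_bound (fl V C Dn l t) (Z.of_nat C) ltac:(lia)). lia.
Qed.

Lemma yv_own V C Dn l m : (0 < C)%nat -> (0 < Dn)%nat -> (0 < nth l V 0)%nat ->
  yv V C Dn l (tm V C Dn (l, m)) = INR m.
Proof.
  intros hC hD hv. unfold yv, tm, etaR, vR. simpl fst; simpl snd.
  rewrite !plus_INR, !mult_INR.
  assert (0 < INR C) by (apply lt_0_INR; auto).
  assert (0 < INR Dn) by (apply lt_0_INR; auto).
  assert (0 < INR (nth l V 0%nat)) by (apply lt_0_INR; auto).
  field. repeat split; lra.
Qed.

Lemma fl_own V C Dn l m : (0 < C)%nat -> (0 < Dn)%nat -> (0 < nth l V 0)%nat ->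
  fl V C Dn l (tm V C Dn (l, m)) = Z.of_nat m.
Proof.
  intros. unfold fl. rewrite yv_own by auto. apply Ip_unique. rewrite <- INR_IZR_INZ. lra.
Qed.

Lemma tm_range V C Dn l m : (0 < C)%nat -> (0 < nth l V 0)%nat -> (S l * nth l V 0 < Dn)%nat ->
  (m < C * nth l V 0)%nat -> 0 <= tm V C Dn (l, m) < 1.
Proof.
  intros hC hv hD hm. unfold tm. simpl fst; simpl snd.
  assert (0 < INR (Dn * C * nth l V 0)%nat) by (apply lt_0_INR; nia).
  split.
  - unfold Rdiv. apply Rmult_le_pos. apply pos_INR. left; apply Rinv_0_lt_compat; auto.
  - apply (Rmult_lt_reg_r (INR (Dn * C * nth l V 0)%nat)); auto. unfold Rdiv.
    rewrite Rmult_assoc, Rinv_l by lra. rewrite Rmult_1_r, Rmult_1_l. apply lt_INR. nia.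
Qed.

Lemma frac_eq a b a' b' : b <> 0 -> b' <> 0 -> a / b = a' / b' -> a * b' = a' * b.
Proof. intros hb hb' h. replace a with (a / b * b) by (field; auto).
  replace a' with (a' / b' * b') by (field; auto). rewrite h. ring. Qed.

Lemma tm_inj V C Dn k l m l' m' : (0 < C)%nat -> (0 < Dn)%nat ->
  (l < k)%nat -> (l' < k)%nat ->
  (0 < nth l V 0)%nat -> (0 < nth l' V 0)%nat ->
  (k * nth l V 0 * nth l' V 0 < Dn)%nat ->
  (l, m) <> (l', m') -> tm V C Dn (l, m) <> tm V C Dn (l', m').
Proof.
  intros hC hD hl hl' hv hv' hb hne e. unfold tm in e. simpl fst in e; simpl snd in e.
  apply frac_eq in e; try (apply not_0_INR; nia).
  rewrite <- !mult_INR in e. apply INR_eq in e.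
  set (v := nth l V 0%nat) in *. set (v' := nth l' V 0%nat) in *.
  assert (E : ((m * Dn + S l * v) * v' = (m' * Dn + S l' * v') * v)%nat).
  { apply (Nat.mul_cancel_r _ _ (Dn * C)). nia. nia. }
  destruct (Nat.eq_dec l l') as [el|nl].
  - subst l'. change v' with v in *. assert (m * Dn * v = m' * Dn * v)%nat by nia. assert (m = m'). { apply (Nat.mul_cancel_r _ _ (Dn * v)). nia. rewrite !Nat.mul_assoc. auto. } subst. auto.
  - assert (EZ : (Z.of_nat (v * v') * (Z.of_nat l - Z.of_nat l') = Z.of_nat Dn * (Z.of_nat m' * Z.of_nat v - Z.of_nat m * Z.of_nat v'))%Z).
    { apply (f_equal Z.of_nat) in E. rewrite !Nat2Z.inj_mul, !Nat2Z.inj_add, !Nat2Z.inj_mul in E.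
      rewrite Nat2Z.inj_mul. rewrite !Nat2Z.inj_succ in E. lia. }
    set (X := (Z.of_nat m' * Z.of_nat v - Z.of_nat m * Z.of_nat v')%Z) in *.
    assert (hP : (0 < Z.of_nat (v * v'))%Z) by nia.
    assert (hPk : (Z.of_nat (v * v') * Z.of_nat k < Z.of_nat Dn)%Z) by nia.
    destruct (Z.eq_dec X 0) as [h0|h0].
    + rewrite h0 in EZ. assert (Z.of_nat l = Z.of_nat l') by nia. lia.
    + assert (h1 : (Z.abs (Z.of_nat (v * v') * (Z.of_nat l - Z.of_nat l')) < Z.of_nat Dn)%Z).
      { rewrite Z.abs_mul. rewrite Z.abs_eq by lia. assert (Z.abs (Z.of_nat l - Z.of_nat l') < Z.of_nat k)%Z by lia. nia. }
      rewrite EZ in h1. rewrite Z.abs_mul in h1. rewrite (Z.abs_eq (Z.of_nat Dn)) in h1 by lia.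
      assert (1 <= Z.abs X)%Z by lia. nia.
Qed.

Lemma nth_map_seq (f : nat -> nat) k l : (l < k)%nat -> nth l (map f (seq 0 k)) 0%nat = f l.
Proof.
  intros h. rewrite nth_indep with (d' := f 0%nat) by (rewrite length_map, length_seq; auto).
  rewrite map_nth, seq_nth; auto.
Qed.

Lemma core V C Dn k e1 e2 : length V = k -> (0 < C)%nat -> (0 < Dn)%nat ->
  (forall v, In v V -> (0 < v)%nat) -> gcdl V = 1%nat ->
  In e1 (evs V C k) -> In e2 (evs V C k) ->
  tm V C Dn e1 < tm V C Dn e2 -> 0 <= tm V C Dn e1 -> tm V C Dn e2 < 1 ->
  cvec V C Dn k (tm V C Dn e1) = cvec V C Dn k (tm V C Dn e2) ->
  exists (t : R) (c : nat -> Z),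
    (forall l, (l < k)%nat -> Rabs (t * vR V l - IZR (c l)) < 1 / INR C) /\
    exists i j, (i < k)%nat /\ (j < k)%nat /\ IZR (c i) * vR V j <> IZR (c j) * vR V i.
Proof.
  intros hl hC hD hpos hg he1 he2 hlt h0 h1 hcv.
  set (t1 := tm V C Dn e1) in *. set (t2 := tm V C Dn e2) in *.
  set (c := fun l => (fl V C Dn l t2 / Z.of_nat C - fl V C Dn l t1 / Z.of_nat C)%Z).
  assert (hCR : 0 < INR C) by (apply lt_0_INR; auto).
  assert (Hc : forall l, (l < k)%nat -> (fl V C Dn l t2 - fl V C Dn l t1 = Z.of_nat C * c l)%Z).
  { intros l hlk. assert (E : cidx V C Dn l t1 = cidx V C Dn l t2).
    { pose proof (f_equal (fun w => nth l w 0%nat) hcv) as E. simpl in E. unfold cvec in E.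
      rewrite !nth_map_seq in E by auto. exact E. }
    unfold cidx in E.
    pose proof (Z.mod_pos_bound (fl V C Dn l t1) (Z.of_nat C) ltac:(lia)).
    pose proof (Z.mod_pos_bound (fl V C Dn l t2) (Z.of_nat C) ltac:(lia)).
    apply Z2Nat.inj in E; try lia.
    pose proof (Z.div_mod (fl V C Dn l t1) (Z.of_nat C) ltac:(lia)).
    pose proof (Z.div_mod (fl V C Dn l t2) (Z.of_nat C) ltac:(lia)).
    unfold c. lia. }
  assert (Hy : forall l, yv V C Dn l t2 - yv V C Dn l t1 = INR C * (t2 - t1) * vR V l).
  { intros. unfold yv. ring. }
  assert (HCc : forall l, (l < k)%nat -> IZR (fl V C Dn l t2) - IZR (fl V C Dn l t1) = INR C * IZR (c l)).
  { intros l hlk. rewrite <- minus_IZR, Hc by auto. rewrite mult_IZR, <- INR_IZR_INZ. auto. }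
  exists (t2 - t1), c. split.
  - intros l hlk. pose proof (Ip_spec (yv V C Dn l t1)). pose proof (Ip_spec (yv V C Dn l t2)).
    fold (fl V C Dn l t1) in H. fold (fl V C Dn l t2) in H0.
    pose proof (Hy l). pose proof (HCc l hlk).
    assert (E : INR C * ((t2 - t1) * vR V l - IZR (c l)) =
      (yv V C Dn l t2 - yv V C Dn l t1) - (IZR (fl V C Dn l t2) - IZR (fl V C Dn l t1))).
    { rewrite H1, H2. ring. }
    apply Rabs_def1; apply (Rmult_lt_reg_l (INR C)); auto; rewrite E.
    + replace (INR C * (1 / INR C)) with 1 by (field; lra). lra.
    + replace (INR C * - (1 / INR C)) with (-1) by (field; lra). lra.
  - apply NNPP. intro Hn.
    assert (Heq : forall i j, (i < k)%nat -> (j < k)%nat -> IZR (c i) * vR V j = IZR (c j) * vR V i).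
    { intros i j hi hj. apply NNPP. intro ne. apply Hn. exists i, j. auto. }
    destruct e1 as [l1 m1]. destruct e2 as [l2 m2].
    apply evs_in in he1. apply evs_in in he2. destruct he1 as [hl1 hm1]. destruct he2 as [hl2 hm2].
    assert (hvp : forall l, (l < k)%nat -> (0 < nth l V 0)%nat).
    { intros l hlk. apply hpos. apply nth_In. lia. }
    assert (hvR : forall l, (l < k)%nat -> 0 < vR V l).
    { intros l hlk. unfold vR. apply lt_0_INR. auto. }
    assert (F1 : fl V C Dn l1 t1 = Z.of_nat m1) by (apply fl_own; auto).
    assert (F2 : fl V C Dn l2 t2 = Z.of_nat m2) by (apply fl_own; auto).
    assert (Y1 : yv V C Dn l1 t1 = INR m1) by (apply yv_own; auto).
    assert (Y2 : yv V C Dn l2 t2 = INR m2) by (apply yv_own; auto).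
    assert (A1 : IZR (c l1) <= (t2 - t1) * vR V l1).
    { pose proof (Ip_spec (yv V C Dn l1 t2)). fold (fl V C Dn l1 t2) in H.
      pose proof (Hy l1). pose proof (HCc l1 hl1). rewrite F1, <- INR_IZR_INZ in H1.
      apply (Rmult_le_reg_l (INR C)); auto. nra. }
    assert (A2 : (t2 - t1) * vR V l2 <= IZR (c l2)).
    { pose proof (Ip_spec (yv V C Dn l2 t1)). fold (fl V C Dn l2 t1) in H.
      pose proof (Hy l2). pose proof (HCc l2 hl2). rewrite F2, <- INR_IZR_INZ in H1.
      apply (Rmult_le_reg_l (INR C)); auto. nra. }
    pose proof (Heq l1 l2 hl1 hl2) as X.
    pose proof (hvR l1 hl1). pose proof (hvR l2 hl2).
    assert (A3 : (t2 - t1) * vR V l2 = IZR (c l2)).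
    { apply Rle_antisym; auto. apply (Rmult_le_reg_l (vR V l1)); auto. nra. }
    assert (A4 : forall l, (l < k)%nat -> IZR (c l) = (t2 - t1) * vR V l).
    { intros l hlk. pose proof (Heq l l2 hlk hl2). apply (Rmult_eq_reg_r (vR V l2)); [|lra]. nra. }
    assert (Hint : IsInt ((t2 - t1) * INR (gcdl V))).
    { apply gcd_int. intros x hx. apply In_nth with (d := 0%nat) in hx. destruct hx as [l [hlk <-]].
      exists (c l). rewrite A4 by lia. unfold vR. auto. }
    rewrite hg in Hint. destruct Hint as [z Hz]. simpl in Hz.
    assert (0 < IZR z < 1) by lra. destruct H1. apply lt_IZR in H1. apply lt_IZR in H2. lia.
Qed.

Lemma pigeon V C k : length V = k -> (0 < C)%nat -> (forall v, In v V -> (0 < v)%nat) ->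
  gcdl V = 1%nat -> (C ^ k < C * sumn V)%nat ->
  exists (t : R) (c : nat -> Z),
    (forall l, (l < k)%nat -> Rabs (t * vR V l - IZR (c l)) < 1 / INR C) /\
    exists i j, (i < k)%nat /\ (j < k)%nat /\ IZR (c i) * vR V j <> IZR (c j) * vR V i.
Proof.
  intros hl hC hpos hg hbig.
  set (Dn := S (k * sumn V * sumn V)).
  set (F := fun e => cvec V C Dn k (tm V C Dn e)).
  assert (hND : ~ NoDup (map F (evs V C k))).
  { intro h. apply NoDup_incl_length with (l' := allvecs k C) in h.
    - rewrite length_map, allvecs_length in h. subst k. rewrite evs_length in h. lia.
    - intros w hw. apply in_map_iff in hw. destruct hw as [e [<- _]]. apply cvec_in; auto. }
  destruct (nodup_map_or F _ (evs_nodup V C k) hND) as [e1 [e2 [he1 [he2 [hne hF]]]]].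
  assert (hvp : forall l, (l < k)%nat -> (0 < nth l V 0)%nat).
  { intros l hlk. apply hpos. apply nth_In. lia. }
  assert (hvs : forall l, (l < k)%nat -> (nth l V 0 <= sumn V)%nat).
  { intros l hlk. apply nth_le_sumn. lia. }
  assert (hrange : forall e, In e (evs V C k) -> 0 <= tm V C Dn e < 1).
  { intros [l m] he. apply evs_in in he. destruct he as [hlk hm].
    apply tm_range; auto. specialize (hvp l hlk). specialize (hvs l hlk). unfold Dn. assert (S l * nth l V 0 <= k * sumn V)%nat by (apply Nat.mul_le_mono; lia). assert (k * sumn V <= k * sumn V * sumn V)%nat by (rewrite <- (Nat.mul_1_r (k * sumn V)) at 1; apply Nat.mul_le_mono_l; lia). lia. }
  assert (hinj : tm V C Dn e1 <> tm V C Dn e2).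
  { destruct e1 as [l m]. destruct e2 as [l' m'].
    pose proof he1 as h1. pose proof he2 as h2.
    apply evs_in in h1. apply evs_in in h2. destruct h1, h2.
    apply tm_inj with (k := k); auto; try lia.
    pose proof (hvs l H). pose proof (hvs l' H1). unfold Dn. assert (k * nth l V 0 * nth l' V 0 <= k * sumn V * sumn V)%nat by (apply Nat.mul_le_mono; [apply Nat.mul_le_mono_l|]; auto). lia. }
  pose proof (hrange e1 he1). pose proof (hrange e2 he2).
  destruct (Rlt_le_dec (tm V C Dn e1) (tm V C Dn e2)) as [h|h].
  - apply (core V C Dn k e1 e2); auto; try lra; unfold Dn; lia.
  - apply (core V C Dn k e2 e1); auto; try lra; unfold Dn; try lia.
Qed.

Lemma ratio_lt x y x' y' : 0 < y -> 0 < y' -> x * y' < x' * y -> x / y < x' / y'.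
Proof.
  intros hy hy' h. apply (Rmult_lt_reg_r (y * y')). nra.
  replace (x / y * (y * y')) with (x * y') by (field; lra).
  replace (x' / y' * (y * y')) with (x' * y) by (field; lra). auto.
Qed.

Lemma ratio_le_inv x y x' y' : 0 < y -> 0 < y' -> x / y <= x' / y' -> x * y' <= x' * y.
Proof.
  intros hy hy' h.
  replace (x * y') with (x / y * (y * y')) by (field; lra).
  replace (x' * y) with (x' / y' * (y * y')) by (field; lra).
  apply Rmult_le_compat_r; auto. nra.
Qed.

Lemma ratio_lt_inv x y x' y' : 0 < y -> 0 < y' -> x / y < x' / y' -> x * y' < x' * y.
Proof.
  intros hy hy' h.
  replace (x * y') with (x / y * (y * y')) by (field; lra).
  replace (x' * y) with (x' / y' * (y * y')) by (field; lra).
  apply Rmult_lt_compat_r; auto. nra.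
Qed.

Lemma list_min (f : nat -> R) (L : list nat) : L <> nil ->
  exists j, In j L /\ forall l, In l L -> f j <= f l.
Proof.
  induction L as [|a L IH]; intros h. congruence.
  destruct L as [|b L'].
  - exists a. split. simpl; auto. intros l [<-|[]]. lra.
  - destruct IH as [j [hj hm]]. congruence.
    destruct (Rle_dec (f a) (f j)) as [h1|h1].
    + exists a. split. simpl; auto. intros l [<-|hl]. lra. specialize (hm l hl). lra.
    + exists j. split. simpl; auto. intros l [<-|hl]. lra. auto.
Qed.

Lemma key k V (C : nat) t (c : nat -> Z) : (2 <= k)%nat -> length V = k ->
  (forall v, In v V -> (0 < v)%nat) -> (2 * C = k * (k + 1))%nat ->
  (forall S : list nat, NoDup S -> length S = (k - 1)%nat ->
        (forall v, In v S -> (0 < v)%nat) -> LR_property S) ->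
  (forall l, (l < k)%nat -> Rabs (t * vR V l - IZR (c l)) <= 1 / INR C) ->
  (exists i j, (i < k)%nat /\ (j < k)%nat /\ IZR (c i) * vR V j <> IZR (c j) * vR V i) ->
  LR_property V.
Proof.
  intros hk hl hpos hC IH hd [i1 [j1 [hi1 [hj1 hne]]]].
  assert (hvR : forall l, (l < k)%nat -> 0 < vR V l).
  { intros l hlk. unfold vR. apply lt_0_INR. apply hpos. apply nth_In. lia. }
  set (rho := fun l => IZR (c l) / vR V l).
  assert (H0 : exists i0 j0, (i0 < k)%nat /\ (j0 < k)%nat /\ rho i0 < rho j0).
  { destruct (Rlt_le_dec (IZR (c i1) * vR V j1) (IZR (c j1) * vR V i1)) as [h|h].
    - exists i1, j1. repeat split; auto. apply ratio_lt; auto.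
    - exists j1, i1. repeat split; auto. apply ratio_lt; auto. destruct h; auto. congruence. }
  destruct H0 as [i [j0 [hi [hj0 hij0]]]].
  set (L := filter (fun l => if Rlt_dec (rho i) (rho l) then true else false) (seq 0 k)).
  assert (hL : forall l, In l L <-> (l < k)%nat /\ rho i < rho l).
  { intros l. unfold L. rewrite filter_In, in_seq. destruct (Rlt_dec (rho i) (rho l)); split; intros; intuition (try lia; try congruence). }
  destruct (list_min rho L) as [j [hjL hjm]].
  { intro e. assert (In j0 L) by (apply hL; auto). rewrite e in H. destruct H. }
  apply hL in hjL. destruct hjL as [hj hij].
  assert (hadj : forall l, (l < k)%nat -> rho l <= rho i \/ rho j <= rho l).
  { intros l hlk. destruct (Rlt_le_dec (rho i) (rho l)); auto. right. apply hjm. apply hL; auto. }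
  assert (hineq : i <> j). { intro e; subst; lra. }
  set (vZ := fun l => Z.of_nat (nth l V 0%nat)).
  assert (hvZ : forall l, IZR (vZ l) = vR V l). { intros. unfold vZ, vR. rewrite INR_IZR_INZ. auto. }
  set (u := fun l => ((vZ i + vZ j) * c l - (c i + c j) * vZ l)%Z).
  assert (hu : forall l, IZR (u l) = (vR V i + vR V j) * IZR (c l) - (IZR (c i) + IZR (c j)) * vR V l).
  { intros. unfold u. rewrite minus_IZR, !mult_IZR, !plus_IZR, !hvZ. auto. }
  assert (huj : u j = (- u i)%Z). { unfold u. ring. }
  assert (hu0 : forall l, (l < k)%nat -> u l <> 0%Z).
  { intros l hlk e. apply (f_equal IZR) in e. rewrite hu in e. simpl in e.
    pose proof (hvR i hi). pose proof (hvR j hj). pose proof (hvR l hlk).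
    assert (Hij : IZR (c i) * vR V j < IZR (c j) * vR V i) by (apply ratio_lt_inv; auto).
    destruct (hadj l hlk) as [h|h]; apply ratio_le_inv in h; auto.
    -
      assert (X : (vR V i + vR V j) * IZR (c l) * vR V i = (IZR (c i) + IZR (c j)) * vR V l * vR V i) by nra.
      assert (Y : (vR V i + vR V j) * (IZR (c l) * vR V i) <= (vR V i + vR V j) * (IZR (c i) * vR V l)).
      { apply Rmult_le_compat_l; lra. }
      assert (Z1 : IZR (c j) * vR V i * vR V l <= IZR (c i) * vR V j * vR V l) by nra.
      assert (IZR (c j) * vR V i <= IZR (c i) * vR V j).
      { apply (Rmult_le_reg_r (vR V l)); auto. }
      lra.
    -
      assert (X : (vR V i + vR V j) * IZR (c l) * vR V j = (IZR (c i) + IZR (c j)) * vR V l * vR V j) by nra.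
      assert (Y : (vR V i + vR V j) * (IZR (c j) * vR V l) <= (vR V i + vR V j) * (IZR (c l) * vR V j)).
      { apply Rmult_le_compat_l; lra. }
      assert (Z1 : IZR (c j) * vR V i * vR V l <= IZR (c i) * vR V j * vR V l) by nra.
      assert (IZR (c j) * vR V i <= IZR (c i) * vR V j).
      { apply (Rmult_le_reg_r (vR V l)); auto. }
      lra. }
  set (absu := fun l => Z.to_nat (Z.abs (u l))).
  set (idx := seq 0 j ++ seq (S j) (k - S j)).
  assert (hidx : forall l, (l < k)%nat -> l <> j -> In l idx).
  { intros l hlk hlj. unfold idx. apply in_or_app. destruct (Nat.lt_ge_cases l j).
    left; apply in_seq; lia. right; apply in_seq; lia. }
  assert (hidx2 : forall l, In l idx -> (l < k)%nat).
  { intros l h. unfold idx in h. apply in_app_or in h. destruct h as [h|h]; apply in_seq in h; lia. }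
  assert (hlidx : length idx = (k - 1)%nat).
  { unfold idx. rewrite length_app, !length_seq. lia. }
  set (S0 := nodup Nat.eq_dec (map absu idx)).
  assert (hS0len : (length S0 <= k - 1)%nat).
  { rewrite <- hlidx, <- (length_map absu idx). apply NoDup_incl_length. apply NoDup_nodup.
    intros x hx. apply nodup_In in hx. auto. }
  set (M := list_max S0).
  set (pad := map (fun x => S (M + x)) (seq 0 (k - 1 - length S0))).
  set (S1 := S0 ++ pad).
  assert (hS1len : length S1 = (k - 1)%nat).
  { unfold S1, pad. rewrite length_app, length_map, length_seq. lia. }
  assert (hS0le : forall x, In x S0 -> (x <= M)%nat).
  { intros x hx. unfold M. pose proof (list_max_le S0 (list_max S0)) as [h _].
    specialize (h (Nat.le_refl _)). rewrite Forall_forall in h. auto. }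
  assert (hS1nd : NoDup S1).
  { unfold S1. apply NoDup_app. apply NoDup_nodup.
    - unfold pad. apply NoDup_map_inj. intros a b e. lia. apply seq_NoDup.
    - intros x hx hx2. unfold pad in hx2. apply in_map_iff in hx2. destruct hx2 as [y [<- _]].
      apply hS0le in hx. lia. }
  assert (hS1pos : forall x, In x S1 -> (0 < x)%nat).
  { intros x hx. unfold S1 in hx. apply in_app_or in hx. destruct hx as [hx|hx].
    - unfold S0 in hx. apply nodup_In in hx. apply in_map_iff in hx. destruct hx as [l [<- hl']].
      unfold absu. pose proof (hu0 l (hidx2 l hl')). lia.
    - unfold pad in hx. apply in_map_iff in hx. destruct hx as [y [<- _]]. lia. }
  assert (hinS : forall l, (l < k)%nat -> In (absu l) S1).
  { intros l hlk. unfold S1. apply in_or_app. left. unfold S0. apply nodup_In. apply in_map_iff.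
    destruct (Nat.eq_dec l j) as [e|e].
    - exists i. split. unfold absu. rewrite e, huj, Z.abs_opp. auto. apply hidx; auto.
    - exists l. split; auto. }
  destruct (IH S1 hS1nd hS1len hS1pos) as [lam Hlam].
  rewrite hS1len in Hlam.
  assert (hkR : INR (k - 1) + 1 = INR k). { rewrite minus_INR by lia. simpl. lra. }
  rewrite hkR in Hlam.
  assert (Hu : forall l, (l < k)%nat -> dist_nint (lam * IZR (u l)) >= 1 / INR k).
  { intros l hlk. specialize (Hlam _ (hinS l hlk)). unfold absu in Hlam.
    rewrite INR_IZR_INZ, Z2Nat.id in Hlam by lia. rewrite abs_IZR in Hlam.
    destruct (Rle_dec 0 (IZR (u l))) as [h|h].
    - rewrite Rabs_right in Hlam by lra. auto.
    - rewrite Rabs_left in Hlam by lra. rewrite <- dist_opp. replace (- (lam * IZR (u l))) with (lam * - IZR (u l)) by ring. auto. }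
  set (del := fun l => t * vR V l - IZR (c l)).
  set (beta := - (vR V i + vR V j)).
  set (r := Int_part (lam * beta + / 2)).
  assert (hr : Rabs (IZR r - lam * beta) <= / 2).
  { pose proof (Ip_spec (lam * beta + / 2)). fold r in H. apply Rabs_le. lra. }
  exists (lam * (del i + del j) + IZR r * t).
  intros v hv. apply In_nth with (d := 0%nat) in hv. destruct hv as [l [hlk <-]]. rewrite hl in hlk.
  assert (E : (lam * (del i + del j) + IZR r * t) * INR (nth l V 0%nat) =
     lam * IZR (u l) + (IZR r - lam * beta) * del l + IZR (r * c l)).
  { rewrite mult_IZR, hu. unfold del, beta. fold (vR V l). ring. }
  rewrite E. eapply Rge_trans. apply dist_pert.
  rewrite Rabs_mult.
  assert (hdl : Rabs (del l) <= 1 / INR C) by (apply hd; auto).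
  assert (hCR : INR C = INR k * (INR k + 1) / 2).
  { apply (f_equal INR) in hC. rewrite !mult_INR, plus_INR in hC. simpl in hC. lra. }
  assert (hk0 : 0 < INR k) by (apply lt_0_INR; lia).
  assert (hb : Rabs (IZR r - lam * beta) * Rabs (del l) <= / 2 * (1 / INR C)).
  { apply Rmult_le_compat; auto; apply Rabs_pos. }
  specialize (Hu l hlk).
  assert (/ 2 * (1 / INR C) = 1 / INR k - 1 / (INR k + 1)) by (rewrite hCR; field; lra).
  rewrite hl. lra.
Qed.

Theorem corollary2 (k : nat) (hk : (2 <= k)%nat)
  (IH : forall S : list nat, NoDup S -> length S = (k - 1)%nat ->
        (forall v, In v S -> (0 < v)%nat) -> LR_property S) :
  forall V : list nat, NoDup V -> length V = k ->
    (forall v, In v V -> (0 < v)%nat) ->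
    gcdl V = 1%nat ->
    INR (prodl V) >= (INR (binom (k + 1) 2) ^ (k - 1) / INR k) ^ k ->
    LR_property V.
Proof.
  intros V hnd hl hpos hg hP.
  set (C := binom (k + 1) 2) in *.
  assert (hC : (2 * C = k * (k + 1))%nat).
  { unfold C. rewrite Nat.add_1_r, binom2. lia. }
  assert (hsb : (C ^ (k - 1) < sumn V)%nat) by (apply sum_bound; auto).
  assert (hC1 : (0 < C)%nat) by nia.
  assert (hbig : (C ^ k < C * sumn V)%nat).
  { replace k with (S (k - 1)) at 1 by lia. rewrite Nat.pow_succ_r'. nia. }
  destruct (pigeon V C k hl hC1 hpos hg hbig) as [t [c [hb hx]]].
  apply (key k V C t c); auto.
  intros l hlk. left. auto.
Qed.
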